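(* Let $C$ be a curve of genus $g$ over an algebraically closed field of characteristic $p>0$, with Hasse-Witt matrix $H=(h_{i,j})_{1\le i,j\le g}$. Assume that either $H$ is diagonal, or $H$ is anti-diagonal (i.e. $h_{i,j}=0$ unless $j=g-i+1$) and for each $1\le i\le g$ either $h_{i,g-i+1}=h_{g-i+1,i}=0$ or both $h_{i,g-i+1}\neq 0$ and $h_{g-i+1,i}\neq 0$. Then $\mathrm{rank}(H)$ equals the $p$-rank of $C$. Consequently, any supersingular curve of genus $g$ whose Hasse-Witt matrix satisfies this assumption is superspecial (i.e. has $a$-number $g$).
   Context: The Hasse-Witt matrix $H$ of $C$ with respect to a basis $v_1,\dots,v_g$ of $H^1(C,\mathcal O_C)$ is defined by $(\mathrm{Frob}_C^*(v_1),\dots,\mathrm{Frob}_C^*(v_g))=(v_1,\dots,v_g)H$, where $\mathrm{Frob}_C^*$ is the $p$-linear map induced by the absolute Frobenius. The $p$-rank $f_C$ is defined by $\#J(C)[p]=p^{f_C}$ and equals $\mathrm{rank}(H H^{(p)}\cdots H^{(p^{g-1})})$, where $H^{(p^i)}$ is $H$ with entries raised to the $p^i$-th power. The $a$-number is $g-\mathrm{rank}(H)$. $C$ is superspecial if $J(C)$ is isomorphic to a product of supersingular elliptic curves (equivalently $H=0$); $C$ is supersingular if $J(C)$ is isogenous to a product of supersingular elliptic curves. *)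

(* Defs.v *)
From HB Require Import structures.
From mathcomp Require Import all_boot all_order all_algebra.
Set Implicit Arguments. Unset Strict Implicit. Unset Printing Implicit Defensive.
Import GRing.Theory.
Local Open Scope ring_scope.

Definition frob_mx (F : fieldType) (p k : nat) (g : nat) (H : 'M[F]_g) : 'M[F]_g :=
  map_mx (fun x => x ^+ (p ^ k)) H.

Fixpoint hw_iter (F : fieldType) (p : nat) (g : nat) (H : 'M[F]_g) (n : nat) : 'M[F]_g :=
  match n with
  | 0 => 1%:M
  | n'.+1 => hw_iter p H n' *m frob_mx p n' H
  end.

Definition p_rank (F : fieldType) (p g : nat) (H : 'M[F]_g) : nat :=
  \rank (hw_iter p H g).

Definition a_number (F : fieldType) (g : nat) (H : 'M[F]_g) : nat :=
  (g - \rank H)%N.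

(* anti-diagonal: h_{i,j} = 0 unless j = g - i + 1 (1-based), i.e. j = rev_ord i *)
Definition is_antidiag_mx (F : fieldType) (g : nat) (H : 'M[F]_g) : Prop :=
  forall i j : 'I_g, j != rev_ord i -> H i j = 0.

Definition hw_hyp (F : fieldType) (g : nat) (H : 'M[F]_g) : Prop :=
  is_diag_mx H \/
  (is_antidiag_mx H /\
   forall i : 'I_g,
     (H i (rev_ord i) = 0 /\ H (rev_ord i) i = 0) \/
     (H i (rev_ord i) != 0 /\ H (rev_ord i) i != 0)).

(* Main.v *)
Require Import Defs.
From HB Require Import structures.
From mathcomp Require Import all_boot all_order all_algebra.
Local Open Scope ring_scope.
Import GRing.Theory.
Set Implicit Arguments. Unset Strict Implicit.

Definition mono (F : fieldType) g (s : 'I_g -> 'I_g) (A : 'M[F]_g) :=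
  forall i j, j != s i -> A i j = 0.

Lemma mono_mul (F : fieldType) g (s t : 'I_g -> 'I_g) (A B : 'M[F]_g) :
  mono s A -> mono t B ->
  mono (fun i => t (s i)) (A *m B) /\
  forall i, (A *m B) i (t (s i)) = A i (s i) * B (s i) (t (s i)).
Proof.
move=> mA mB; split.
  move=> i j nj; rewrite mxE big1 // => k _.
  case: (eqVneq k (s i)) => [->|nk]; first by rewrite (mB _ _ nj) mulr0.
  by rewrite (mA _ _ nk) mul0r.
move=> i; rewrite mxE (bigD1 (s i)) //= big1 ?addr0 // => k nk.
by rewrite (mA _ _ nk) mul0r.
Qed.

Lemma rank_cmp (F : fieldType) g (s t : 'I_g -> 'I_g) (A B : 'M[F]_g) :
  (forall i, t (t i) = i) -> mono s A -> mono t B ->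
  (forall i, B i (t i) = 0 -> A i (s i) = 0) -> (\rank A <= \rank B)%N.
Proof.
move=> tK mA mB hz.
pose U := \matrix_(k, j) (if j == s (t k) then A (t k) j / B (t k) k else 0).
have -> : A = B *m U.
  apply/matrixP => i j; rewrite mxE (bigD1 (t i)) //= big1 ?addr0; last first.
    by move=> k nk; rewrite (mB _ _ nk) mul0r.
  rewrite mxE tK; case: (eqVneq j (s i)) => [->|nj]; last first.
    by rewrite (mA _ _ nj) mulr0.
  case: (eqVneq (B i (t i)) 0) => [b0|bn0].
    by rewrite b0 mul0r (hz _ b0).
  by rewrite mulrC divfK.
exact: mxrankM_maxl.
Qed.

Lemma iter_invol (T : Type) (f : T -> T) n x :
  (forall y, f (f y) = y) -> iter n f (iter n f x) = x.
Proof.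
move=> fK; elim: n x => // n IH x.
by rewrite [X in iter n.+1 f X]iterS iterSr fK IH.
Qed.

Lemma hw_struct (F : fieldType) (p g : nat) (H : 'M[F]_g) (sg : 'I_g -> 'I_g) :
  (0 < p)%N -> (forall i, sg (sg i) = i) -> mono sg H ->
  (forall i, H i (sg i) = 0 -> H (sg i) (sg (sg i)) = 0) ->
  forall n, mono (iter n.+1 sg) (hw_iter p H n.+1) /\
   forall i, (hw_iter p H n.+1 i (iter n.+1 sg i) == 0) = (H i (sg i) == 0).
Proof.
move=> p0 sK mH pair.
have pairE : forall i, (H (sg i) (sg (sg i)) == 0) = (H i (sg i) == 0).
  move=> i; apply/eqP/eqP => [h|]; last exact: pair.
  by have := pair _ h; rewrite !sK.
have itE : forall n i, (H (iter n sg i) (sg (iter n sg i)) == 0) = (H i (sg i) == 0).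
  elim=> // n IH i; by rewrite iterS pairE IH.
have mF : forall k, mono sg (frob_mx p k H).
  by move=> k i j nj; rewrite mxE (mH _ _ nj) expr0n expn_eq0 eqn0Ngt p0.
elim=> [|n [mX eX]].
  rewrite /= mul1mx; split.
    exact: mF.
  by move=> i; rewrite mxE expn0 expr1.
have [m e] := mono_mul mX (mF n.+1).
split; first exact: m.
move=> i; rewrite /= e mulf_eq0 eX mxE expf_eq0 expn_gt0 p0 /=.
have := itE n.+1 i; rewrite iterS => ->.
by rewrite orbb.
Qed.

Lemma main_rank (F : fieldType) (p g : nat) (H : 'M[F]_g) (sg : 'I_g -> 'I_g) :
  (0 < p)%N -> (forall i, sg (sg i) = i) -> mono sg H ->
  (forall i, H i (sg i) = 0 -> H (sg i) (sg (sg i)) = 0) ->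
  \rank H = p_rank p H.
Proof.
move=> p0 sK mH pair; rewrite /p_rank.
case: g H sg sK mH pair => [|n] H sg sK mH pair.
  by rewrite !thinmx0 .
have [mX eX] := hw_struct p0 sK mH pair n.
apply/eqP; rewrite eqn_leq; apply/andP; split.
  apply: (rank_cmp (t := iter n.+1 sg)) mH mX _.
    by move=> i; apply: iter_invol.
  by move=> i /eqP; rewrite eX => /eqP.
apply: (rank_cmp sK) mX mH _.
by move=> i /eqP; rewrite -eX => /eqP.
Qed.

Unset Implicit Arguments.
Theorem lemma2p13 (F : closedFieldType) (p g : nat) (H : 'M[F]_g) :
  p \in [pchar F] -> hw_hyp H ->
  \rank H = p_rank p H /\
  (p_rank p H = 0%N -> a_number H = g /\ H = 0).
Proof.
move=> /andP [pp _] hyp.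
have p0 : (0 < p)%N by apply: prime_gt0.
have r : \rank H = p_rank p H.
  case: hyp => [/is_diag_mxP d | [ad pr]].
    apply: (main_rank (sg := id)) => //.
    by move=> i j nj; apply: d; rewrite eq_sym.
  apply: (main_rank (sg := @rev_ord g)) => //.
    exact: rev_ordK.
  move=> i h; rewrite rev_ordK.
  by case: (pr i) => [[_ ->]|[/eqP]].
split=> // h0.
have : \rank H = 0%N by rewrite r.
move=> /eqP; rewrite mxrank_eq0 => /eqP ->.
by rewrite /a_number mxrank0 subn0.
Qed.
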